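(* Let $G$ and $H$ be two nontrivial connected graphs. Then $hn_{cc}(G\boxtimes H)=2$.
   Context: All graphs are finite, simple and undirected. For a graph $G$ and $S\subseteq V(G)$, the cycle interval $\langle S\rangle$ consists of the vertices of $S$ together with every vertex $w\in V(G)\setminus S$ such that the induced subgraph $G[S\cup\{w\}]$ contains a cycle through $w$. $S$ is cycle convex if $\langle S\rangle=S$. The cycle convex hull $\langle S\rangle_C$ is the smallest cycle convex set containing $S$. A set $S$ is a (cycle) hull set if $\langle S\rangle_C=V(G)$, and the cycle hull number $hn_{cc}(G)$ is the minimum cardinality of a hull set. The strong product $G\boxtimes H$ has vertex set $V(G)\times V(H)$, with $(g_1,h_1)\sim(g_2,h_2)$ iff ($g_1\sim g_2$ and $h_1=h_2$) or ($g_1=g_2$ and $h_1\sim h_2$) or ($g_1\sim g_2$ and $h_1\sim h_2$). A graph is nontrivial if it has at least two vertices. *)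

(* Defs.v *)
From mathcomp Require Import all_boot.
From mathcomp Require Import boolp.
Set Implicit Arguments. Unset Strict Implicit. Unset Printing Implicit Defensive.

Definition simple_graph (T : finType) (e : rel T) : Prop :=
  symmetric e /\ irreflexive e.

Definition nontrivial (T : finType) : Prop := 1 < #|T|.

Definition connected_graph (T : finType) (e : rel T) : Prop :=
  forall x y : T, connect e x y.

Definition induced (T : finType) (e : rel T) (A : {set T}) : rel T :=
  fun x y => [&& x \in A, y \in A & e x y].

Definition is_graph_cycle (T : finType) (r : rel T) (c : seq T) : bool :=
  [&& 2 < size c, uniq c & cycle r c].

Definition cycle_through (T : finType) (e : rel T) (A : {set T}) (w : T) : Prop :=
  exists c : seq T, is_graph_cycle (induced e A) c /\ w \in c.

Definition cycle_interval (T : finType) (e : rel T) (S : {set T}) : {set T} :=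
  S :|: [set w | (w \notin S) &&
                 `[< cycle_through e (w |: S) w >]].

Definition cycle_convex (T : finType) (e : rel T) (S : {set T}) : Prop :=
  cycle_interval e S = S.

Definition cycle_hull (T : finType) (e : rel T) (S : {set T}) : {set T} :=
  \bigcap_(C : {set T} | (S \subset C) && `[< cycle_convex e C >]) C.

Definition hull_set (T : finType) (e : rel T) (S : {set T}) : Prop :=
  cycle_hull e S = [set: T].

(* cycle hull number: minimum cardinality of a hull set (V(G) is always one) *)
Definition hn_cc (T : finType) (e : rel T) : nat :=
  \big[minn/#|T|]_(S : {set T} | `[< hull_set e S >]) #|S|.

Definition strong_prod (T1 T2 : finType) (e1 : rel T1) (e2 : rel T2)
  : rel (T1 * T2) :=
  fun x y =>
    [|| e1 x.1 y.1 && (x.2 == y.2),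
        (x.1 == y.1) && e2 x.2 y.2 |
        e1 x.1 y.1 && e2 x.2 y.2].

(* Main.v *)
Require Import Defs.
From mathcomp Require Import all_boot boolp zify.
Set Implicit Arguments. Unset Strict Implicit.

Lemma bigmin_le (I : eqType) (r : seq I) (P : pred I) (F : I -> nat) d i0 :
  i0 \in r -> P i0 -> \big[minn/d]_(i <- r | P i) F i <= F i0.
Proof.
elim: r => [|a r IH] //= Hin HP; rewrite big_cons.
move: Hin; rewrite in_cons => /orP[/eqP <-|Hr]; first by rewrite HP geq_minl.
case: (P a); last exact: IH.
by apply: leq_trans (geq_minr _ _) (IH Hr HP).
Qed.

Section Gen.
Variable T : finType.
Variable e : rel T.
Hypothesis eirr : irreflexive e.

Lemma convex_closed (C : {set T}) a b w :
  cycle_convex e C -> a \in C -> b \in C -> e a b -> e w a -> e b w -> w \in C.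
Proof.
move=> cC aC bC ab wa bw; apply/negPn/negP => wC.
have : w \in cycle_interval e C.
  rewrite /cycle_interval inE; apply/orP; right; rewrite inE wC /=.
  apply/asboolP; exists [:: w; a; b]; split; last by rewrite inE eqxx.
  have wa' : w != a by apply: contraNneq wC => ->.
  have wb' : w != b by apply: contraNneq wC => ->.
  have ab' : a != b by apply: contraTneq ab => ->; rewrite eirr.
  rewrite /is_graph_cycle /= !inE negb_or wa' wb' ab' /= /induced.
  by rewrite !inE eqxx aC bC !orbT wa ab bw.
by rewrite cC (negbTE wC).
Qed.

Lemma small_convex (S : {set T}) : #|S| < 2 -> cycle_convex e S.
Proof.
move=> hS; rewrite /cycle_convex /cycle_interval.
apply/setP => x; rewrite !inE; apply/orP/idP => [[//|]|]; last by left.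
rewrite andbC => /andP[/asboolP [c [hc _]] _].
move: hc => /and3P[sc uc cc].
have sub : {subset c <= x |: S}.
  by move=> y yc; have := next_cycle cc yc; rewrite /induced => /and3P[].
have : size c <= #|x |: S|.
  rewrite -(card_uniqP uc); apply: subset_leq_card; apply/subsetP => y; exact: sub.
rewrite cardsU1; move: sc hS; case: (x \notin S) => /=; lia.
Qed.
End Gen.

Section Prod.
Variables (T1 T2 : finType) (e1 : rel T1) (e2 : rel T2).
Hypothesis s1 : symmetric e1.
Hypothesis s2 : symmetric e2.
Hypothesis i1 : irreflexive e1.
Hypothesis i2 : irreflexive e2.
Local Notation E := (strong_prod e1 e2).

Lemma irrE : irreflexive E.
Proof. by move=> [x y]; rewrite /strong_prod /= !i1 i2 /= andbF. Qed.

Lemma spG a b y : e1 a b -> E (a, y) (b, y).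
Proof. by move=> h; rewrite /strong_prod /= h eqxx. Qed.
Lemma spH x a b : e2 a b -> E (x, a) (x, b).
Proof. by move=> h; rewrite /strong_prod /= h eqxx !orbT. Qed.
Lemma spD a b c d : e1 a b -> e2 c d -> E (a, c) (b, d).
Proof. by move=> h h'; rewrite /strong_prod /= h h' !orbT. Qed.

Variable C : {set T1 * T2}.
Hypothesis cC : cycle_convex E C.

Definition K x x' y y' :=
  [&& (x, y) \in C, (x, y') \in C, (x', y) \in C & (x', y') \in C].

Lemma stepG x x' y y' z : K x x' y y' -> e2 y y' -> e1 x' z -> K x' z y y'.
Proof.
move=> /and4P[_ _ h3 h4] ey ez; rewrite /K h3 h4 /=.
have ez' : e1 z x' by rewrite s1.
have ey' : e2 y' y by rewrite s2.
apply/andP; split.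
- exact: (convex_closed irrE cC h3 h4 (spH x' ey) (spG y ez') (spD ez ey')).
- exact: (convex_closed irrE cC h4 h3 (spH x' ey') (spG y' ez') (spD ez ey)).
Qed.

Lemma stepH x x' y y' z : K x x' y y' -> e1 x x' -> e2 y' z -> K x x' y' z.
Proof.
move=> /and4P[_ h2 _ h4] ex ez; rewrite /K h2 h4 /=.
have ez' : e2 z y' by rewrite s2.
have ex' : e1 x' x by rewrite s1.
apply/andP; split.
- exact: (convex_closed irrE cC h2 h4 (spG y' ex) (spH x ez') (spD ex' ez)).
- exact: (convex_closed irrE cC h4 h2 (spG y' ex') (spH x' ez') (spD ex ez)).
Qed.

Lemma pathG y y' p : e2 y y' -> forall s, (exists s0, e1 s0 s /\ K s0 s y y') ->
  path e1 s p -> exists s0, e1 s0 (last s p) /\ K s0 (last s p) y y'.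
Proof.
move=> ey; elim: p => [|a p IH] s // [s0 [es Ks]] /= /andP[ea hp].
apply: IH hp; exists s; split => //; exact: stepG Ks ey ea.
Qed.

Lemma pathH x x' p : e1 x x' -> forall s, (exists s0, e2 s0 s /\ K x x' s0 s) ->
  path e2 s p -> exists s0, e2 s0 (last s p) /\ K x x' s0 (last s p).
Proof.
move=> ex; elim: p => [|a p IH] s // [s0 [es Ks]] /= /andP[ea hp].
apply: IH hp; exists s; split => //; exact: stepH Ks ex ea.
Qed.
End Prod.

Lemma get_edge (T : finType) (e : rel T) :
  nontrivial T -> connected_graph e -> exists u v, e u v.
Proof.
move=> /card_gt1P [x [y [_ _ xy]]] /(_ x y) /connectP [[|z p] /= hp ey].
  by rewrite ey eqxx in xy.
by exists x, z; case/andP: hp.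
Qed.


Theorem mainTheorem1 (T1 T2 : finType) (e1 : rel T1) (e2 : rel T2) :
  simple_graph e1 -> simple_graph e2 ->
  nontrivial T1 -> nontrivial T2 ->
  connected_graph e1 -> connected_graph e2 ->
  hn_cc (strong_prod e1 e2) = 2.
Proof.
move=> [s1 i1] [s2 i2] n1 n2 c1 c2.
have [u1 [v1 ex]] := get_edge n1 c1.
have [u2 [v2 ey]] := get_edge n2 c2.
have cardT : 3 < #|{: T1 * T2}|.
  rewrite card_prod; move: n1 n2; rewrite /nontrivial; nia.
set S0 := [set (u1, u2); (v1, v2)].
have hS0 : hull_set (strong_prod e1 e2) S0.
  rewrite /hull_set /cycle_hull; apply/setP => [[x y]]; rewrite in_setT.
  apply/bigcapP => C /andP[sSC /asboolP cC].
  have a1 : (u1, u2) \in C by apply: (subsetP sSC); rewrite !inE eqxx.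
  have a2 : (v1, v2) \in C by apply: (subsetP sSC); rewrite !inE eqxx orbT.
  have K0 : K C u1 v1 u2 v2.
    have ex' : e1 v1 u1 by rewrite s1.
    have ey' : e2 v2 u2 by rewrite s2.
    rewrite /K a1 a2 /= andbT; apply/andP; split.
    - exact:  (convex_closed (irrE i1 i2) cC a1 a2 (spD ex ey) (spH e1 u1 ey') (spG e2 v2 ex')).
    - exact: (convex_closed (irrE i1 i2) cC a1 a2 (spD ex ey) (spG e2 u2 ex') (spH e1 v1 ey')).
  have /connectP [p hp ->] := c1 v1 x.
  have [s0 [es Ks]] := pathG s1 s2 i1 i2 cC ey (ex_intro _ u1 (conj ex K0)) hp.
  have /connectP [q hq ->] := c2 v2 y.
  have [t0 [et Kt]] := pathH s1 s2 i1 i2 cC es (ex_intro _ u2 (conj ey Ks)) hq.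
  by case/and4P: Kt.
apply/eqP; rewrite eqn_leq; apply/andP; split.
  have -> : 2 = #|S0|.
    rewrite cards2; case: eqP => // [[h _]]; by rewrite h i1 in ex.
  apply: bigmin_le; first exact: mem_index_enum.
  by apply/asboolP.
apply: (big_ind (fun n => 1 < n)); first by apply: ltnW; apply: ltnW.
  by move=> a b ha hb; rewrite leq_min ha hb.
move=> S /asboolP hS; rewrite ltnNge; apply/negP => hc.
have cS : cycle_convex (strong_prod e1 e2) S by apply: small_convex.
have : [set: T1 * T2] \subset S.
  rewrite -hS; apply: bigcap_inf; rewrite subxx /=; exact/asboolP.
move/subset_leq_card; rewrite cardsT; move: hc cardT; rewrite !card_prod; by move=> h1 h2 h3; have := leq_trans (leq_trans h2 h3) h1.
Qed.
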